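(* Let measurements be modeled by a Gaussian process on $\mathbb{R}^2$ with squared-exponential kernel $k(x,x')=\sigma_0^2\exp\!\left(-\frac{\|x-x'\|^2}{2l^2}\right)$ ($\sigma_0^2>0$, $l>0$) and i.i.d. additive Gaussian noise of variance $\omega^2>0$. Let $0<\Delta<\sigma_0^2$, let $r_{max}=l\sqrt{-\log\left(1-\frac{\Delta}{\sigma_0^2}\right)}$, and let $\alpha>1$. Given a disk of radius $\frac{1}{\alpha}r_{max}$ centered at $x_i$, taking $n_\alpha$ measurements at $x_i$ suffices to ensure $MSE(x)\le\Delta$ for all points $x$ inside the disk, whenever $$n_\alpha\ge\left\lceil\frac{\omega^2}{\sigma_0^2}\,\frac{1}{\left(1-\frac{\Delta}{\sigma_0^2}\right)^{\frac{1}{\alpha^2}-1}-1}\right\rceil.$$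
   Context: For measurement locations $X=(x_1,\dots,x_n)$ (repetitions allowed, meaning multiple measurements at one location), the GP posterior variance at $x$ is $\hat\sigma^2_{x|X}=k(x,x)-\mathbf{k}(x,X)\left[\mathbf{K}(X,X)+\omega^2\mathbf{I}\right]^{-1}\mathbf{k}(X,x)$, where $\mathbf{K}(X,X)$ has entries $k(x_p,x_q)$ and $\mathbf{k}(x,X)=(k(x,x_1),\dots,k(x,x_n))$. The MSE at $x$ is $MSE(x)=\hat\sigma^2_{x|X}$. *)

(* Defs.v *)
From HB Require Import structures.
From mathcomp Require Import all_boot all_order all_algebra.
From mathcomp Require Import all_classical all_reals all_analysis.
Set Implicit Arguments. Unset Strict Implicit. Unset Printing Implicit Defensive.
Import Order.TTheory GRing.Theory Num.Theory.
Local Open Scope ring_scope.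

Definition sqdist {R : realType} (x y : 'rV[R]_2) : R :=
  \sum_(i < 2) (x 0 i - y 0 i) ^+ 2.

(* Squared-exponential kernel k(x,x') = s0 exp(-||x-x'||^2/(2 l^2)), s0 = sigma_0^2 *)
Definition se_kernel {R : realType} (s0 l : R) (x y : 'rV[R]_2) : R :=
  s0 * expR (- (sqdist x y) / (2 * l ^+ 2)).

(* GP posterior variance at x given measurement locations X (repetitions allowed)
   and noise variance w2 = omega^2:
   k(x,x) - k(x,X) [K(X,X) + w2 I]^{-1} k(X,x). *)
Definition post_var {R : realType} (k : 'rV[R]_2 -> 'rV[R]_2 -> R) (w2 : R)
  (n : nat) (X : 'I_n -> 'rV[R]_2) (x : 'rV[R]_2) : R :=
  let K : 'M[R]_n := \matrix_(p, q) k (X p) (X q) in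
  let kx : 'rV[R]_n := \row_p k x (X p) in
  k x x - (kx *m invmx (K + w2%:M) *m kx^T) 0 0.

Definition MSE {R : realType} k w2 n X x : R := @post_var R k w2 n X x.

(* Main.v *)
Require Import Defs.
From HB Require Import structures.
From mathcomp Require Import all_boot all_order all_algebra.
From mathcomp Require Import all_classical all_reals all_analysis.
From mathcomp Require Import ring lra.
Import Order.TTheory GRing.Theory Num.Theory.
Local Open Scope ring_scope.

Lemma sum_delta (R : realType) n (j : 'I_n) (f : 'I_n -> R) :
  \sum_(i < n) (i == j)%:R * f i = f j.
Proof.
rewrite (bigD1 j) //= eqxx mul1r big1 ?addr0 // => i /negbTE ->; by rewrite mul0r.
Qed.

Lemma key (R : realType) n (a c w : R) : 0 < w -> 0 <= a ->
  ((\row_(p < n) c) *m invmx ((\matrix_(p < n, q < n) a) + w%:M) *m (\row_(p < n) c)^T) 0 0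
  = c ^+ 2 * n%:R / (n%:R * a + w).
Proof.
move=> w0 a0.
have N0 : 0 < n%:R * a + w by apply: ltr_wpDl => //; apply: mulr_ge0.
set N := n%:R * a + w.
set A := _ + _.
pose B : 'M[R]_n := \matrix_(i, j) (w^-1 * ((i == j)%:R - a / N)).
have AB : A *m B = 1%:M.
  apply/matrixP => i j; rewrite !mxE.
  under eq_bigr do rewrite !mxE.
  under eq_bigr => k _ do rewrite mulrDl.
  rewrite big_split /=.
  rewrite [X in _ + X](eq_bigr (fun k => (k == i)%:R * (w^-1 * ((k == j)%:R - a / N) * w))); last first.
    by move=> k _; rewrite eq_sym; case: (k == i); rewrite ?mulr1n ?mulr0n ?mul1r ?mul0r // mulrC.
  rewrite sum_delta -!big_distrr /= big_split /= sumrN sumr_const card_ord.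
  rewrite (eq_bigr (fun k => (k == j)%:R * 1)); last by move=> k _; rewrite mulr1.
  rewrite sum_delta.
  have wn : w != 0 by rewrite gt_eqF.
  have Nn : N != 0 by rewrite gt_eqF.
  rewrite -mulr_natr /N; field.
  by rewrite -/N Nn wn.
have Au : A \in unitmx by case: (mulmx1_unit AB).
have iA : invmx A = B by rewrite -[invmx A]mulmx1 -AB mulmxA mulVmx // mul1mx.
have wn : w != 0 by rewrite gt_eqF.
have Nn : N != 0 by rewrite gt_eqF.
have rowB : forall j, (\row_(p < n) c *m B) 0 j = c / N.
  move=> j; rewrite mxE; under eq_bigr do rewrite !mxE.
  rewrite -!big_distrr /= big_split /= sumrN sumr_const card_ord.
  rewrite (eq_bigr (fun k => (k == j)%:R * 1)); last by move=> k _; rewrite mulr1.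
  rewrite sum_delta -mulr_natr /N; field.
  by rewrite -/N Nn wn.
rewrite iA mxE; under eq_bigr do rewrite rowB !mxE.
rewrite sumr_const card_ord -mulr_natr /N; field.
by rewrite -/N Nn.
Qed.

Lemma sqdist_ge0 (R : realType) (x y : 'rV[R]_2) : 0 <= sqdist x y.
Proof. by apply: sumr_ge0 => i _; apply: sqr_ge0. Qed.

Lemma sqdist_xx (R : realType) (x : 'rV[R]_2) : sqdist x x = 0.
Proof. by apply: big1 => i _; rewrite subrr expr0n. Qed.

(* s0 = sigma_0^2, w2 = omega^2 *)
Theorem lemma3 (R : realType) (s0 l w2 Delta alpha : R) (xi : 'rV[R]_2) (n : nat) :
  0 < s0 -> 0 < l -> 0 < w2 -> 0 < Delta -> Delta < s0 -> 1 < alpha ->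
  let rmax := l * Num.sqrt (- ln (1 - Delta / s0)) in
  (Num.ceil (w2 / s0 *
      (((1 - Delta / s0) `^ (1 / alpha ^+ 2 - 1) - 1)^-1)) <= n%:Z)%R ->
  forall x : 'rV[R]_2, Num.sqrt (sqdist x xi) <= rmax / alpha ->
    MSE (se_kernel s0 l) w2 (fun _ : 'I_n => xi) x <= Delta.
Proof.
move=> s0p lp w2p Dp Ds0 a1 rmax hceil x hx.
have kxx : forall y, se_kernel s0 l y y = s0.
  by move=> y; rewrite /se_kernel sqdist_xx oppr0 mul0r expR0 mulr1.
rewrite /MSE /post_var key //; last by rewrite kxx ltW.
rewrite !kxx.
set b := 1 - Delta / s0.
have b0 : 0 < b by rewrite /b subr_gt0 ltr_pdivrMr // mul1r.
have b1 : b < 1 by rewrite /b ltrBlDr ltrDl divr_gt0.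
have lnb : ln b < 0 by apply: ln_lt0; rewrite b0 b1.
have a0 : 0 < alpha by apply: lt_trans a1.
set d := sqdist x xi.
have d0 : 0 <= d by apply: sqdist_ge0.
have hd : d <= l ^+ 2 * (- ln b) / alpha ^+ 2.
  have y0 : 0 <= rmax / alpha.
    by apply: divr_ge0; [apply: mulr_ge0; [apply: ltW|apply: sqrtr_ge0]|apply: ltW].
  have := ler_pM (sqrtr_ge0 _) (sqrtr_ge0 _) hx hx.
  rewrite -!expr2 sqr_sqrtr // /rmax expr_div_n exprMn sqr_sqrtr //.
  by rewrite oppr_ge0 ltW.
set e := expR (- d / (2 * l ^+ 2)).
set q := b `^ (1 / alpha ^+ 2 - 1).
have hE : q * b <= e ^+ 2.
  rewrite /q /powR gt_eqF // -[X in _ * X <= _](@lnK _ b) ?posrE // -expRD /e -expRM_natl.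
  rewrite ler_expR.
  have an : alpha != 0 by rewrite gt_eqF.
  have ln0 : l != 0 by rewrite gt_eqF.
  have -> : (1 / alpha ^+ 2 - 1) * ln b + ln b = ln b / alpha ^+ 2 by field.
  have -> : 2 * (- d / (2 * l ^+ 2)) = - (d / l ^+ 2) by field.
  rewrite lerNr -mulNr ler_pdivrMr ?exprn_gt0 //.
  apply: (le_trans hd); rewrite le_eqVlt; apply/orP; left; apply/eqP; field.
  exact: an.
have q1 : 1 < q.
  rewrite /q /powR gt_eqF // expR_gt1 nmulr_lgt0 // subr_lt0.
  by rewrite mul1r invf_lt1 ?exprn_gt0 // exprn_egt1.
have hn : w2 / s0 <= n%:R * (q - 1).
  rewrite -ler_pdivrMr ?subr_gt0 //.
  apply: (le_trans (ceil_ge _)).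
  rewrite -[n%:R]/((n%:Z)%:~R) ler_int; exact: hceil.
rewrite /se_kernel -/d -/e.
have N0 : 0 < n%:R * s0 + w2 by apply: ltr_wpDl => //; apply: mulr_ge0 => //; apply: ltW.
suff h : s0 - Delta <= (s0 * e) ^+ 2 * n%:R / (n%:R * s0 + w2) by lra.
rewrite ler_pdivlMr //.
have -> : s0 - Delta = s0 * b by rewrite /b; field; rewrite gt_eqF.
have hn' : w2 <= s0 * (n%:R * (q - 1)) by rewrite mulrC -ler_pdivrMr.
have n0 : 0 <= n%:R :> R by [].
have h1 := ler_wpM2l (mulr_ge0 (ltW s0p) (ltW b0)) hn'.
have h2 := ler_wpM2l (mulr_ge0 (mulr_ge0 (ltW s0p) (ltW s0p)) n0) hE.
rewrite exprMn.
nra.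
Qed.
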